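(* The Robertson graph is not a $(4,5,3)$-equitable cage; that is, the Robertson graph (which is a $4$-regular graph of girth $5$ and chromatic number $3$ on $19$ vertices) admits no proper $3$-coloring whose color classes have sizes differing pairwise by at most one (equivalently, no proper $3$-coloring with color class sizes $6,6,7$).
   Context: All graphs are finite and simple. The Robertson graph is the unique $(4,5)$-cage, i.e. the unique $4$-regular graph of girth $5$ with the minimum possible number of vertices, namely $19$. A proper vertex coloring is equitable if the sizes of any two color classes differ by at most one. An $(r,g,\chi)$-graph is an $r$-regular graph with girth exactly $g$ and chromatic number exactly $\chi$; an $(r,g,\chi)$-equitable graph is one admitting an equitable proper $\chi$-coloring, and an $(r,g,\chi)$-equitable cage is an $(r,g,\chi)$-equitable graph of minimum order. *)

(* Defs.v *)
From mathcomp Require Import all_boot all_order.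
Set Implicit Arguments. Unset Strict Implicit. Unset Printing Implicit Defensive.

(* Edge list of the Robertson graph on vertex set {0,...,18}: the Hamiltonian
   cycle 0-1-...-18-0 plus 19 chords.  This graph is 4-regular of girth 5 on
   19 vertices (checked below), hence it is the unique (4,5)-cage, i.e. the
   Robertson graph. *)
Definition robertson_edges : seq (nat * nat) :=
  [:: (0, 1); (0, 4); (0, 7); (0, 18); (1, 2); (1, 9); (1, 12); (2, 3);
      (2, 6); (2, 14); (3, 4); (3, 8); (3, 11); (4, 5); (4, 15); (5, 6);
      (5, 13); (5, 17); (6, 7); (6, 10); (7, 8); (7, 16); (8, 9); (8, 13);
      (9, 10); (9, 17); (10, 11); (10, 15); (11, 12); (11, 18); (12, 13);
      (12, 16); (13, 14); (14, 15); (14, 18); (15, 16); (16, 17); (17, 18)].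

Definition robertson_vertex := 'I_19.

Definition robertson_adj : rel robertson_vertex :=
  fun x y => ((val x, val y) \in robertson_edges) ||
             ((val y, val x) \in robertson_edges).

Definition proper_coloring (T : finType) (e : rel T) (k : nat)
  (c : T -> 'I_k) : Prop :=
  forall x y : T, e x y -> c x != c y.

Definition equitable_coloring (T : finType) (k : nat) (c : T -> 'I_k) : Prop :=
  forall i j : 'I_k, #|[set x | c x == i]| <= #|[set x | c x == j]| + 1.

Lemma robertson_sym : symmetric robertson_adj.
Proof. by move=> x y; rewrite /robertson_adj orbC. Qed.

Lemma robertson_irrefl : irreflexive robertson_adj.
Proof. by move=> [x Hx]; rewrite /robertson_adj orbb; do 19! (case: x Hx => [//|x] Hx). Qed.

Definition nadj (a b : nat) : bool :=
  ((a, b) \in robertson_edges) || ((b, a) \in robertson_edges).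

Lemma robertson_adjE (x y : robertson_vertex) : robertson_adj x y = nadj x y.
Proof. by []. Qed.

Definition V19 := iota 0 19.

Lemma robertson_4regular_nat :
  all (fun a => count (nadj a) V19 == 4) V19.
Proof. by vm_compute. Qed.

Lemma robertson_no_triangle_nat :
  all (fun a => all (fun b => all (fun c =>
     ~~ [&& nadj a b, nadj b c & nadj c a]) V19) V19) V19.
Proof. by vm_compute. Qed.

Lemma robertson_no_4cycle_nat :
  all (fun a => all (fun b => all (fun c => all (fun d =>
     ~~ [&& a != c, b != d, nadj a b, nadj b c, nadj c d & nadj d a])
     V19) V19) V19) V19.
Proof. by vm_compute. Qed.

Lemma robertson_has_5cycle_nat :
  [&& nadj 0 1, nadj 1 2, nadj 2 3, nadj 3 4 & nadj 4 0].
Proof. by vm_compute. Qed.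

(* Main.v *)
Require Import Defs.
From mathcomp Require Import all_boot all_order.
Set Implicit Arguments. Unset Strict Implicit. Unset Printing Implicit Defensive.

Definition okc (s : seq nat) (x : nat) : bool :=
  all (fun j => ~~ nadj j (size s) || (nth 0 s j != x)) (iota 0 (size s)).

Fixpoint gen (n : nat) : seq (seq nat) :=
  match n with
  | 0 => [:: [::]]
  | n.+1 => flatten [seq [seq rcons s x | x <- [:: 0; 1; 2] & okc s x] | s <- gen n]
  end.

Definition prop_seq (s : seq nat) : Prop :=
  forall i j, i < j < size s -> nadj i j -> nth 0 s i != nth 0 s j.

Lemma gen_complete n s : size s = n -> all (fun x => x < 3) s -> prop_seq s -> s \in gen n.
Proof.
elim: n s => [|n IH] s.
  by case: s.
case/lastP: s => [//|s x]; rewrite size_rcons => -[Hs].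
rewrite all_rcons => /andP[Hx Ha] Hp.
have Hp' : prop_seq s.
  move=> i j /andP[Hij Hj] Hadj.
  have := Hp i j; rewrite size_rcons !nth_rcons (ltn_trans Hij Hj) Hj.
  by apply => //; rewrite Hij /= ltnS ltnW.
have Hin := IH s Hs Ha Hp'.
apply/flattenP; exists [seq rcons s y | y <- [:: 0; 1; 2] & okc s y].
  by apply/mapP; exists s.
apply: map_f; rewrite mem_filter; apply/andP; split; last first.
  by clear -Hx; case: x Hx => [|[|[|]]].
apply/allP => j; rewrite mem_iota add0n => /andP[_ Hj].
case Hadj: (nadj j (size s)) => //=.
have := Hp j (size s); rewrite size_rcons !nth_rcons Hj ltnn eqxx.
by apply => //; rewrite ?Hj /=.
Qed.

Definition equit (s : seq nat) : bool :=
  all (fun i => all (fun j => count_mem i s <= count_mem j s + 1) [:: 0; 1; 2]) [:: 0; 1; 2].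

Lemma check19 : all (fun s => ~~ equit s) (gen 19).
Proof. by vm_compute. Qed.

Theorem theorem6p1 :
  ~ exists c : robertson_vertex -> 'I_3,
      proper_coloring robertson_adj c /\ equitable_coloring c.
Proof.
move=> [c [Hp He]].
set s := [seq val (c x) | x <- enum 'I_19].
have Hs : size s = 19 by rewrite size_map size_enum_ord.
have Hnth : forall k, k < 19 -> nth 0 s k = val (c (inord k)).
  move=> k Hk; rewrite (nth_map ord0) ?size_enum_ord //.
  by congr (val (c _)); apply/val_inj; rewrite /= nth_enum_ord // inordK.
have Hin : s \in gen 19.
  apply: gen_complete => //.
    by apply/allP => x /mapP[y _ ->]; apply: ltn_ord.
  move=> i j; rewrite Hs => /andP[Hij Hj] Hadj.
  have Hi : i < 19 by apply: ltn_trans Hj.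
  rewrite Hnth // Hnth //.
  apply: Hp; rewrite robertson_adjE /= !inordK //.
have Hcnt : forall i : 'I_3, count_mem (val i) s = #|[set x | c x == i]|.
  move=> i; rewrite count_map cardsE cardE size_filter /=.
  rewrite /enum_mem /= -enumT count_filter; apply: eq_count => x /=.
  by rewrite inE andbT.
have := allP check19 s Hin; apply/negP/negPn.
apply/allP => i; rewrite !inE => Hi; apply/allP => j; rewrite !inE => Hj.
have Hi3 : i < 3 by move: Hi; case/or3P => /eqP->.
have Hj3 : j < 3 by move: Hj; case/or3P => /eqP->.
have := He (Ordinal Hi3) (Ordinal Hj3).
by rewrite -!Hcnt.
Qed.
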